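(* Let $m,n\ge 1$, $1\le r\le mn$, let $\mathcal{B}=\mathcal{B}(m,n;r)$ and let $G$ be the symmetry group acting on $\mathcal{B}$. Fix a division of the cells of the $m\times n$ grid into labelled regions such that every element of $G$ maps each region onto a region, and let board partitions be taken with respect to this division. Suppose a subset $\overline{\mathcal{B}}\subseteq\mathcal{B}$ satisfies: (1) $\overline{\mathcal{B}}$ is a disjoint union of sets $\pi_1,\dots,\pi_t$, where each $\pi_i$ is the set of all boards in $\mathcal{B}$ having some fixed board partition; (2) every board $B\in\mathcal{B}$ is equivalent under $G$ to some $B'\in\overline{\mathcal{B}}$; (3) if $B,B'\in\overline{\mathcal{B}}$ are equivalent under $G$, then they have the same board partition (and hence both lie in the same $\pi_i$). For each $1\le i\le t$ let $K_i=\{g\in G: g\cdot\pi_i=\pi_i\}$ be the subgroup of symmetries preserving the set $\pi_i$. Then \[|\mathcal{B}(m,n;r)|=\sum_{i=1}^t|\pi_i|\cdot[G:K_i].\]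
   Context: Consider a rectangular grid with $m$ rows and $n$ columns of unit square cells. For $1\le r\le mn$, $\mathcal{B}(m,n;r)$ is the set of all ways to choose exactly $r$ of the $mn$ cells to be ''blocked''; each such choice is called a board (so $|\mathcal{B}(m,n;r)|=\binom{mn}{r}$). Symmetries of the rectangle permute the cells and hence act on boards. The symmetry group $G$ is: the dihedral group $D_4$ of order 8 (rotations by $0,90,180,270$ degrees and reflections across the horizontal midline, vertical midline and both diagonals) if $m=n>1$; the group $\langle H,V\rangle=\{R_0,H,V,R_{180}\}$ (identity, reflections across the horizontal and vertical midlines, rotation by 180 degrees) if $m\ne n$ and $m,n>1$; and $\langle R_{180}\rangle$ if exactly one of $m,n$ equals 1. Two boards $B,B'$ are equivalent under $G$ if $g\cdot B=B'$ for some $g\in G$. Given a division of the grid into labelled disjoint regions, the board partition of a board is the ordered tuple giving the number of blocked cells of the board lying in each region. *)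

(* Defs.v *)
From mathcomp Require Import all_boot all_order all_fingroup.
Set Implicit Arguments. Unset Strict Implicit. Unset Printing Implicit Defensive.

(* Cells of the m x n grid: (row, column). *)
Notation cell m n := ('I_m * 'I_n)%type.

(* Turn a map into a permutation (identity if the map is not injective;
   all maps used below are injective in the cases where they are used). *)
Definition mkperm (T : finType) (f : T -> T) : {perm T} :=
  match @idP (injectiveb f) with
  | ReflectT H => perm (injectiveP _ H)
  | ReflectF _ => 1%g
  end.

Section Syms.
Variables m n : nat.
Definition symH : {perm cell m n} := mkperm (fun c : cell m n => (rev_ord c.1, c.2)).
Definition symV : {perm cell m n} := mkperm (fun c : cell m n => (c.1, rev_ord c.2)).
Definition symR180 : {perm cell m n} :=
  mkperm (fun c : cell m n => (rev_ord c.1, rev_ord c.2)).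
(* the following are meaningful only when m = n *)
Definition symD : {perm cell m n} :=
  mkperm (fun c : cell m n => (insubd c.1 (val c.2), insubd c.2 (val c.1))).
Definition symAD : {perm cell m n} :=
  mkperm (fun c : cell m n =>
    (insubd c.1 (n.-1 - val c.2), insubd c.2 (m.-1 - val c.1))).
Definition symR90 : {perm cell m n} :=
  mkperm (fun c : cell m n => (insubd c.1 (val c.2), insubd c.2 (m.-1 - val c.1))).
Definition symR270 : {perm cell m n} :=
  mkperm (fun c : cell m n => (insubd c.1 (n.-1 - val c.2), insubd c.2 (val c.1))).

Definition symG : {set {perm cell m n}} :=
  if m == n then
    [set 1%g; symR90; symR180; symR270; symH; symV; symD; symAD]
  else if (m == 1) || (n == 1) then [set 1%g; symR180]
  else [set 1%g; symH; symV; symR180].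
End Syms.

(* Action of a symmetry on a board (a set of blocked cells). *)
Definition act_board (T : finType) (g : {perm T}) (B : {set T}) : {set T} :=
  [set g x | x in B].

Definition boards (m n r : nat) : {set {set cell m n}} :=
  [set B : {set cell m n} | #|B| == r].

(* Board partition w.r.t. a labelled division reg : cell -> 'I_k
   (region a = reg^-1(a)): number of blocked cells in each region. *)
Definition board_partition (m n k : nat) (reg : cell m n -> 'I_k)
    (B : {set cell m n}) : {ffun 'I_k -> nat} :=
  [ffun a => #|B :&: reg @^-1: [set a]|].

Definition boards_with_partition (m n r k : nat) (reg : cell m n -> 'I_k)
    (p : {ffun 'I_k -> nat}) : {set {set cell m n}} :=
  [set B in boards m n r | board_partition reg B == p].

Definition stab_boards (m n : nat) (S : {set {set cell m n}}) :
    {set {perm cell m n}} :=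
  [set g in symG m n | [set act_board g B | B in S] == S].

(* Main.v *)
Require Import Defs.
From mathcomp Require Import all_boot all_order all_fingroup.
From mathcomp Require Import zify.
Set Implicit Arguments. Unset Strict Implicit. Unset Printing Implicit Defensive.
Lemma mkpermE (T : finType) (f : T -> T) : injective f -> forall x, mkperm f x = f x.
Proof.
move=> inj x; rewrite /mkperm.
destruct (@idP (injectiveb f)) as [H|H]; first by rewrite permE.
by case: H; apply/injectiveP.
Qed.

Definition tr m (s a b : bool) (c : cell m m) : cell m m :=
  let c' := if s then (c.2, c.1) else c in
  (if a then rev_ord c'.1 else c'.1, if b then rev_ord c'.2 else c'.2).

Lemma tr_comp m s1 a1 b1 s2 a2 b2 (c : cell m m) :
  tr s2 a2 b2 (tr s1 a1 b1 c) =
  tr (s1 (+) s2) (if s2 then b1 (+) a2 else a1 (+) a2)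
                 (if s2 then a1 (+) b2 else b1 (+) b2) c.
Proof.
case: c => x y; case: s1; case: a1; case: b1; case: s2; case: a2; case: b2;
  by rewrite /tr /= ?rev_ordK.
Qed.

Lemma tr_inj m s a b : injective (@tr m s a b).
Proof.
apply: (@can_inj _ _ _ (tr s (if s then b else a) (if s then a else b))) => c.
by rewrite tr_comp; case: s; case: a; case: b; case: c.
Qed.

Lemma rev_ordE m (i : 'I_m) (j : 'I_m) : val j = m.-1 - val i -> j = rev_ord i.
Proof. by move=> h; apply/val_inj; rewrite /= h; case: m i {j h} => [[]|m' i] //=; rewrite subSS. Qed.

Lemma insubd_eq m (i : 'I_m) v : v < m -> val (insubd i v) = v.
Proof. by move=> h; rewrite val_insubd h. Qed.

Lemma mkperm_tr m (f : cell m m -> cell m m) s a b :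
  f =1 tr s a b -> mkperm f =1 tr s a b.
Proof. by move=> e x; rewrite mkpermE ?e // => y z; rewrite !e; apply: tr_inj. Qed.

Lemma predsub_lt m k : k < m -> m.-1 - k < m.
Proof. by case: m => [|m'] //= _; rewrite ltnS leq_subr. Qed.

Ltac solve_sym := apply: mkperm_tr; case=> x y; rewrite /tr /=;
  congr pair; first [ by apply/val_inj; rewrite /= insubd_eq ?ltn_ord
                    | by apply: rev_ordE; rewrite insubd_eq //; apply: predsub_lt; exact: ltn_ord ].

Lemma symR90E m : symR90 m m =1 tr true false true. Proof. solve_sym. Qed.
Lemma symR180E m : symR180 m m =1 tr false true true. Proof. by apply: mkperm_tr; case. Qed.
Lemma symR270E m : symR270 m m =1 tr true true false. Proof. solve_sym. Qed.
Lemma symHE m : symH m m =1 tr false true false. Proof. by apply: mkperm_tr; case. Qed.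
Lemma symVE m : symV m m =1 tr false false true. Proof. by apply: mkperm_tr; case. Qed.
Lemma symDE m : symD m m =1 tr true false false. Proof. solve_sym. Qed.
Lemma symADE m : symAD m m =1 tr true true true. Proof. solve_sym. Qed.

Lemma symGsq_tr m g : g \in symG m m -> exists s a b, g =1 tr s a b.
Proof.
rewrite /symG eqxx !inE.
case/orP=> [/orP[/orP[/orP[/orP[/orP[/orP[]|]|]|]|]|]|] /eqP->.
- by exists false, false, false => -[x y]; rewrite perm1.
- by exists true, false, true; apply: symR90E.
- by exists false, true, true; apply: symR180E.
- by exists true, true, false; apply: symR270E.
- by exists false, true, false; apply: symHE.
- by exists false, false, true; apply: symVE.
- by exists true, false, false; apply: symDE.
- by exists true, true, true; apply: symADE.
Qed.

Lemma tr_symGsq m (g : {perm cell m m}) s a b : g =1 tr s a b -> g \in symG m m.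
Proof.
move=> e; rewrite /symG eqxx.
have H (h : {perm cell m m}) : h =1 tr s a b -> g = h.
  by move=> e'; apply/permP => c; rewrite e e'.
case: s e H; case: a; case: b => e H.
- by rewrite (H _ (@symADE m)) !inE eqxx !orbT.
- by rewrite (H _ (@symR270E m)) !inE eqxx !orbT.
- by rewrite (H _ (@symR90E m)) !inE eqxx !orbT.
- by rewrite (H _ (@symDE m)) !inE eqxx !orbT.
- by rewrite (H _ (@symR180E m)) !inE eqxx !orbT.
- by rewrite (H _ (@symHE m)) !inE eqxx !orbT.
- by rewrite (H _ (@symVE m)) !inE eqxx !orbT.
- by rewrite (H 1%g) ?inE ?eqxx // => -[x y]; rewrite perm1.
Qed.

Lemma symGsq_group m : group_set (symG m m).
Proof.
apply/group_setP; split; first by rewrite /symG eqxx !inE eqxx.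
move=> g h /symGsq_tr[s1 [a1 [b1 e1]]] /symGsq_tr[s2 [a2 [b2 e2]]].
by apply: tr_symGsq => c; rewrite permM e1 e2 tr_comp.
Qed.

Definition fl m n (a b : bool) (c : cell m n) : cell m n :=
  (if a then rev_ord c.1 else c.1, if b then rev_ord c.2 else c.2).

Lemma fl_comp m n a1 b1 a2 b2 (c : cell m n) :
  fl a2 b2 (fl a1 b1 c) = fl (a1 (+) a2) (b1 (+) b2) c.
Proof. by case: c => x y; case: a1; case: b1; case: a2; case: b2; rewrite /fl /= ?rev_ordK. Qed.

Lemma fl_inj m n a b : injective (@fl m n a b).
Proof.
apply: (@can_inj _ _ _ (fl a b)) => c.
by rewrite fl_comp; case: a; case: b; case: c.
Qed.

Lemma mkperm_fl m n (f : cell m n -> cell m n) a b :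
  f =1 fl a b -> mkperm f =1 fl a b.
Proof. by move=> e x; rewrite mkpermE ?e // => y z; rewrite !e; apply: fl_inj. Qed.

Lemma symHE' m n : symH m n =1 fl true false. Proof. by apply: mkperm_fl; case. Qed.
Lemma symVE' m n : symV m n =1 fl false true. Proof. by apply: mkperm_fl; case. Qed.
Lemma symR180E' m n : symR180 m n =1 fl true true. Proof. by apply: mkperm_fl; case. Qed.

Lemma symG_group m n : group_set (symG m n).
Proof.
have [<-|mn] := eqVneq m n; first exact: symGsq_group.
rewrite /symG (negbTE mn).
case: ifP => _.
  have RR : (symR180 m n * symR180 m n = 1)%g.
    by apply/permP => c; rewrite permM perm1 !symR180E' fl_comp; case: c.
  apply/group_setP; split; first by rewrite !inE eqxx.
  move=> g h; rewrite !inE => /orP[]/eqP-> /orP[]/eqP->;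
    by rewrite ?mul1g ?mulg1 ?RR eqxx ?orbT.
have E g : g \in [set 1%g; symH m n; symV m n; symR180 m n] <-> exists a b, g =1 fl a b.
  split.
    rewrite !inE => /orP[/orP[/orP[]|]|] /eqP->.
    - by exists false, false => -[x y]; rewrite perm1.
    - by exists true, false; apply: symHE'.
    - by exists false, true; apply: symVE'.
    - by exists true, true; apply: symR180E'.
  case=> a [b e].
  have H (h : {perm cell m n}) : h =1 fl a b -> g = h.
    by move=> e'; apply/permP => c; rewrite e e'.
  case: a e H; case: b => e H.
  - by rewrite (H _ (@symR180E' m n)) !inE eqxx !orbT.
  - by rewrite (H _ (@symHE' m n)) !inE eqxx !orbT.
  - by rewrite (H _ (@symVE' m n)) !inE eqxx !orbT.
  - by rewrite (H 1%g) ?inE ?eqxx // => -[x y]; rewrite perm1.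
apply/group_setP; split; first by rewrite !inE eqxx.
move=> g h /E[a1 [b1 e1]] /E[a2 [b2 e2]]; apply/E.
by exists (a1 (+) a2), (b1 (+) b2) => c; rewrite permM e1 e2 fl_comp.
Qed.

Canonical symG_grp m n := Group (symG_group m n).

Section Act.
Variable T : finType.
Implicit Types (g h : {perm T}) (B X Y : {set T}) (S : {set {set T}}).

Lemma act_boardM g h B : act_board (g * h)%g B = act_board h (act_board g B).
Proof. by rewrite /act_board -imset_comp; apply: eq_imset => x; rewrite permM. Qed.

Lemma act_board1 B : act_board 1%g B = B.
Proof. by rewrite /act_board (eq_imset _ (perm1 (T:=T))) imset_id. Qed.

Lemma act_boardK g : cancel (act_board g) (act_board g^-1).
Proof. by move=> B; rewrite -act_boardM mulgV act_board1. Qed.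

Lemma act_boardKV g : cancel (act_board g^-1) (act_board g).
Proof. by move=> B; rewrite -act_boardM mulVg act_board1. Qed.

Lemma act_board_inj g : injective (act_board g).
Proof. exact: can_inj (act_boardK g). Qed.

Lemma card_act g B : #|act_board g B| = #|B|.
Proof. by apply: card_imset; apply: perm_inj. Qed.

Lemma card_actI g X Y : #|act_board g X :&: act_board g Y| = #|X :&: Y|.
Proof. by rewrite /act_board -imsetI ?card_imset //; [apply: perm_inj | move=> x y _ _; apply: perm_inj]. Qed.

Definition actS' g S := [set act_board g B | B in S].

Lemma actSM g h S : actS' (g * h)%g S = actS' h (actS' g S).
Proof. by rewrite /actS' -imset_comp; apply: eq_imset => B; rewrite act_boardM. Qed.

Lemma card_actS g S : #|actS' g S| = #|S|.
Proof. by apply: card_imset; apply: act_board_inj. Qed.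
End Act.


Lemma indexA m n (S : {set {set cell m n}}) :
  #|symG m n : stab_boards S|%g = #|[set actS' g S | g in symG m n]|.
Proof.
have := card_orbit (('P^*)^*)%act (symG_grp m n) S.
have -> : (symG m n :&: 'C[S | ('P^*)^*])%g = stab_boards S.
  by apply/setP => g; rewrite /stab_boards !inE /= sub1set inE.
by move=> <-.
Qed.

Lemma sum_mem (T : finType) (A S : {set T}) :
  S \subset A -> \sum_(x in A) (x \in S : nat) = #|S|.
Proof.
move=> sSA.
rewrite (eq_bigr (fun x => if x \in S then 1 else 0)); last by move=> x _; case: (x \in S).
rewrite -big_mkcondr -sum1_card; apply: eq_bigl => x.
by case xS: (x \in S); rewrite ?andbT ?andbF // (subsetP sSA).
Qed.

Section Main.
Variables (m n r k t : nat) (reg : cell m n -> 'I_k)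
  (p : 'I_t -> {ffun 'I_k -> nat}) (Bbar : {set {set cell m n}}).
Hypothesis hreg : forall g, g \in symG m n -> forall a : 'I_k, exists b : 'I_k,
     act_board g (reg @^-1: [set a]) = reg @^-1: [set b].
Local Notation pi i := (boards_with_partition r reg (p i)).
Hypothesis hBbar : Bbar = \bigcup_(i < t) pi i.
Hypothesis hdisj : forall i j : 'I_t, i != j -> [disjoint pi i & pi j].
Hypothesis h2 : forall B, B \in boards m n r ->
     exists2 g, g \in symG m n & act_board g B \in Bbar.
Hypothesis h3 : forall B B', B \in Bbar -> B' \in Bbar ->
     (exists2 g, g \in symG m n & act_board g B = B') ->
     board_partition reg B = board_partition reg B'.

Lemma part_act f b : f \in symG m n ->
  exists a, forall B, board_partition reg (act_board f B) b = board_partition reg B a.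
Proof.
move=> fG; have [a ea] := hreg (groupVr fG) b.
exists a => B; rewrite /board_partition !ffunE -ea -(card_actI f B) act_boardKV //.
Qed.

Lemma stabL f i B1 : f \in symG m n -> B1 \in pi i -> act_board f B1 \in pi i ->
  actS' f (pi i) = pi i.
Proof.
move=> fG B1i fB1i.
have sub : actS' f (pi i) \subset pi i.
  apply/subsetP => _ /imsetP[B Bi ->].
  move: Bi B1i fB1i; rewrite !inE => /andP[cB /eqP pB] /andP[_ /eqP pB1] /andP[_ /eqP pfB1].
  rewrite card_act cB /=; apply/eqP/ffunP => b.
  have [a ea] := @part_act f b fG.
  by rewrite ea pB -pB1 -ea pfB1 pB1.
apply/eqP; rewrite eqEcard sub card_actS /=; exact: leqnn.
Qed.


Local Notation O i := [set actS' g (pi i) | g in symG m n].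

Lemma in_Bbar i B : B \in pi i -> B \in Bbar.
Proof. by move=> Bi; rewrite hBbar; apply/bigcupP; exists i. Qed.

Lemma stepC B : B \in boards m n r ->
  \sum_(i < t) \sum_(S in O i) (B \in S : nat) = 1.
Proof.
move=> Bb; have [g0 g0G] := h2 Bb; rewrite hBbar => /bigcupP[i0 _ gBi0].
set S0 := actS' (g0^-1)%g (pi i0).
have BS0 : B \in S0 by apply/imsetP; exists (act_board g0 B); rewrite ?act_boardK.
have S0O : S0 \in O i0 by apply/imsetP; exists (g0^-1)%g; rewrite ?groupV.
have uniq i S : S \in O i -> B \in S -> i = i0 /\ S = S0.
  case/imsetP=> h hG -> /imsetP[B1 B1i eB].
  have fG : (h * g0)%g \in symG m n by rewrite groupM.
  have efB1 : act_board (h * g0)%g B1 = act_board g0 B by rewrite act_boardM -eB.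
  have := h3 (in_Bbar B1i) (in_Bbar gBi0) (ex_intro2 _ _ (h * g0)%g fG efB1).
  move: (B1i) (gBi0); rewrite !inE => /andP[_ /eqP ->] /andP[_ /eqP ->] epi.
  have ii0 : i = i0.
    apply/eqP; apply: contraT => ne.
    by have /disjointFr/(_ B1i) := hdisj ne; rewrite -epi B1i.
  subst i; split => //.
  have B1i0 : B1 \in pi i0 by [].
  have := stabL fG B1i0; rewrite efB1 => /(_ gBi0) st.
  by rewrite /S0 -{2}st -actSM mulgK.
rewrite (bigD1 i0) //= (bigD1 S0) //= BS0 big1 ?addn0; last first.
  move=> S /andP[SO ne]; apply/eqP; rewrite eqb0; apply/negP => BS.
  by have [_ eS] := uniq _ _ SO BS; rewrite eS eqxx in ne.
rewrite big1 ?addn0 // => i ne; apply: big1 => S SO; apply/eqP; rewrite eqb0.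
by apply/negP => BS; have [ei _] := uniq _ _ SO BS; rewrite ei eqxx in ne.
Qed.

Lemma count_main : #|boards m n r| = \sum_(i < t) #|pi i| * #|O i|.
Proof.
rewrite -sum1_card.
rewrite (eq_bigr (fun B => \sum_(i < t) \sum_(S in O i) (B \in S : nat)));
  last by move=> B Bb; rewrite stepC.
rewrite exchange_big /=; apply: eq_bigr => i _.
rewrite exchange_big /= mulnC -sum_nat_const; apply: eq_bigr => S SO.
case/imsetP: SO => g gG ->.
rewrite -(card_actS g (pi i)) sum_mem //.
apply/subsetP => _ /imsetP[B Bi ->].
by move: Bi; rewrite !inE card_act => /andP[].
Qed.
End Main.

Theorem theorem3p1 (m n r k t : nat)
  (reg : cell m n -> 'I_k)
  (p : 'I_t -> {ffun 'I_k -> nat})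
  (Bbar : {set {set cell m n}}) :
  0 < m -> 0 < n -> 0 < r -> r <= m * n ->
  (* every element of G maps each region onto a region *)
  (forall g, g \in symG m n -> forall a : 'I_k, exists b : 'I_k,
     act_board g (reg @^-1: [set a]) = reg @^-1: [set b]) ->
  (* (1) Bbar is the disjoint union of pi_1, ..., pi_t *)
  Bbar = \bigcup_(i < t) boards_with_partition r reg (p i) ->
  (forall i j : 'I_t, i != j ->
     [disjoint boards_with_partition r reg (p i) & boards_with_partition r reg (p j)]) ->
  (* (2) every board is equivalent to one in Bbar *)
  (forall B, B \in boards m n r ->
     exists2 g, g \in symG m n & act_board g B \in Bbar) ->
  (* (3) equivalent boards of Bbar have the same board partition *)
  (forall B B', B \in Bbar -> B' \in Bbar ->
     (exists2 g, g \in symG m n & act_board g B = B') ->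
     board_partition reg B = board_partition reg B') ->
  #|boards m n r| =
    \sum_(i < t) #|boards_with_partition r reg (p i)| *
                 #|symG m n : stab_boards (boards_with_partition r reg (p i))|%g.
Proof.
move=> _ _ _ _ hreg hBbar hdisj h2 h3.
rewrite (count_main hreg hBbar hdisj h2 h3); apply: eq_bigr => i _.
by rewrite indexA.
Qed.
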